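(* For $n\ge2$ and $1\le\ell\le n-1$, let $t_{n,\ell}$ be the number of permutations $\sigma$ of $\{1,\dots,n\}$ avoiding both $1243$ and $1324$ such that $\sigma^{-1}(n)-\sigma^{-1}(1)=1$ (i.e., $1$ is immediately to the left of $n$) and $\sigma(1)=\ell$. Then for $n\ge3$, \[ t_{n,1}=t_{n,2}=2^{n-3}\quad\text{and}\quad t_{n,n-2}=t_{n,n-1}=\sum_{\ell=1}^{n-2}t_{n-1,\ell}. \]
   Context: A permutation avoids a pattern $p$ if no subsequence of its one-line notation is order-isomorphic to $p$. *)

(* Defs.v *)
From mathcomp Require Import all_boot all_fingroup.
From mathcomp Require Import perm.
Set Implicit Arguments. Unset Strict Implicit. Unset Printing Implicit Defensive.

(* One-line notation of a permutation of {1..n}, represented as s : {perm 'I_n}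
   acting on {0..n-1}; the value at position i (1-based i+1) is (s i).+1. *)
Definition oneline (n : nat) (s : {perm 'I_n}) : seq nat :=
  [seq (s i).+1 | i <- enum 'I_n].

Definition contains (w p : seq nat) : bool :=
  [exists m : (size w).-tuple bool,
    (size (mask m w) == size p) &&
    [forall a : 'I_(size p), forall b : 'I_(size p),
      (nth 0 (mask m w) a < nth 0 (mask m w) b) == (nth 0 p a < nth 0 p b)]].

Definition avoids (w p : seq nat) : bool := ~~ contains w p.

Definition Tset (n l : nat) : {set {perm 'I_n}} :=
  [set s : {perm 'I_n} |
     avoids (oneline s) [:: 1; 2; 4; 3] &&
     avoids (oneline s) [:: 1; 3; 2; 4] &&
     (index n (oneline s) == (index 1 (oneline s)).+1) &&
     (head 0 (oneline s) == l)].

Definition t (n l : nat) : nat := #|Tset n l|.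

(* Main.v *)
Require Import Defs.
From mathcomp Require Import all_boot all_fingroup.
From mathcomp Require Import zify.
Set Implicit Arguments. Unset Strict Implicit. Unset Printing Implicit Defensive.

Definition ordiso (s p : seq nat) : bool :=
  (size s == size p) &&
  [forall a : 'I_(size p), forall b : 'I_(size p),
      (nth 0 s a < nth 0 s b) == (nth 0 p a < nth 0 p b)].

Lemma containsP w p : contains w p <-> exists s, subseq s w /\ ordiso s p.
Proof.
split.
  case/existsP => m /andP [H1 H2]; exists (mask m w); split; first exact: mask_subseq.
  by rewrite /ordiso H1.
case=> s [/subseqP [m Hm ->]] /andP [H1 H2].
have Hm' : size m == size w by apply/eqP.
by apply/existsP; exists (Tuple Hm'); rewrite /= H1.
Qed.

Definition Cn3 (P : nat -> nat -> nat -> bool) (w : seq nat) :=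
  exists a b c, subseq [:: a; b; c] w /\ P a b c.
Definition Cn4 (P : nat -> nat -> nat -> nat -> bool) (w : seq nat) :=
  exists a b c d, subseq [:: a; b; c; d] w /\ P a b c d.

Definition P1243 a b c d := [&& a < b, b < d & d < c].
Definition P1324 a b c d := [&& a < c, c < b & b < d].
Definition P132 a b c := (a < c) && (c < b).
Definition P213 a b c := (b < a) && (a < c).

Ltac ordx k i j H :=
  move/forallP: (H) => /(_ (@Ordinal k i erefl)) /forallP /(_ (@Ordinal k j erefl)) /= /eqP.

Lemma c1243P w : contains w [:: 1; 2; 4; 3] <-> Cn4 P1243 w.
Proof.
rewrite containsP; split.
  case=> s [Hs /andP [Hsz H]].
  case: s Hs Hsz H => [|a [|b [|c [|d [|e s]]]]] //= Hs _ H.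
  exists a, b, c, d; split=> //.
  ordx 4 0 1 H; ordx 4 1 3 H; ordx 4 3 2 H; rewrite /P1243; lia.
case=> a [b [c [d [Hs Hp]]]]; exists [:: a; b; c; d]; split=> //.
rewrite /ordiso eqxx /=; apply/forallP => i; apply/forallP => j; move: Hp; rewrite /P1243.
by case: i => [[|[|[|[|i]]]] Hi] //; case: j => [[|[|[|[|j]]]] Hj] //= Hp; apply/eqP; lia.
Qed.

Lemma c1324P w : contains w [:: 1; 3; 2; 4] <-> Cn4 P1324 w.
Proof.
rewrite containsP; split.
  case=> s [Hs /andP [Hsz H]].
  case: s Hs Hsz H => [|a [|b [|c [|d [|e s]]]]] //= Hs _ H.
  exists a, b, c, d; split=> //.
  ordx 4 0 2 H; ordx 4 2 1 H; ordx 4 1 3 H; rewrite /P1324; lia.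
case=> a [b [c [d [Hs Hp]]]]; exists [:: a; b; c; d]; split=> //.
rewrite /ordiso eqxx /=; apply/forallP => i; apply/forallP => j; move: Hp; rewrite /P1324.
by case: i => [[|[|[|[|i]]]] Hi] //; case: j => [[|[|[|[|j]]]] Hj] //= Hp; apply/eqP; lia.
Qed.

Lemma c132P w : contains w [:: 1; 3; 2] <-> Cn3 P132 w.
Proof.
rewrite containsP; split.
  case=> s [Hs /andP [Hsz H]].
  case: s Hs Hsz H => [|a [|b [|c [|e s]]]] //= Hs _ H.
  exists a, b, c; split=> //.
  ordx 3 0 2 H; ordx 3 2 1 H; rewrite /P132; lia.
case=> a [b [c [Hs Hp]]]; exists [:: a; b; c]; split=> //.
rewrite /ordiso eqxx /=; apply/forallP => i; apply/forallP => j; move: Hp; rewrite /P132.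
by case: i => [[|[|[|i]]] Hi] //; case: j => [[|[|[|j]]] Hj] //= Hp; apply/eqP; lia.
Qed.

Lemma c213P w : contains w [:: 2; 1; 3] <-> Cn3 P213 w.
Proof.
rewrite containsP; split.
  case=> s [Hs /andP [Hsz H]].
  case: s Hs Hsz H => [|a [|b [|c [|e s]]]] //= Hs _ H.
  exists a, b, c; split=> //.
  ordx 3 1 0 H; ordx 3 0 2 H; rewrite /P213; lia.
case=> a [b [c [Hs Hp]]]; exists [:: a; b; c]; split=> //.
rewrite /ordiso eqxx /=; apply/forallP => i; apply/forallP => j; move: Hp; rewrite /P213.
by case: i => [[|[|[|i]]] Hi] //; case: j => [[|[|[|j]]] Hj] //= Hp; apply/eqP; lia.
Qed.

Definition A3 w := ~ Cn3 P132 w /\ ~ Cn3 P213 w.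
Definition A4 w := ~ Cn4 P1243 w /\ ~ Cn4 P1324 w.
Definition A3b w := avoids w [:: 1; 3; 2] && avoids w [:: 2; 1; 3].
Definition A4b w := avoids w [:: 1; 2; 4; 3] && avoids w [:: 1; 3; 2; 4].

Lemma A3bP w : A3b w <-> A3 w.
Proof.
rewrite /A3b /avoids /A3 -c132P -c213P; split.
  by case/andP => /negP H1 /negP H2.
by case=> H1 H2; apply/andP; split; apply/negP.
Qed.

Lemma A4bP w : A4b w <-> A4 w.
Proof.
rewrite /A4b /avoids /A4 -c1243P -c1324P; split.
  by case/andP => /negP H1 /negP H2.
by case=> H1 H2; apply/andP; split; apply/negP.
Qed.
Lemma sub_tail (a x : nat) s u : subseq (a :: s) (x :: u) -> subseq s u.
Proof.
rewrite /=; case: eqP => // _ H.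
exact: subseq_trans (subseq_cons s a) H.
Qed.

Lemma sub_cons_cat (x : nat) s p q : subseq s q -> subseq (x :: s) (p ++ x :: q).
Proof.
move=> H; rewrite -[x :: s]cat0s; apply: cat_subseq; first exact: sub0seq.
by rewrite /= eqxx.
Qed.

Lemma subseq_catP (s u v : seq nat) : subseq s (u ++ v) ->
  exists s1 s2, [/\ s = s1 ++ s2, subseq s1 u & subseq s2 v].
Proof.
case/subseqP => m Hm ->.
rewrite -(cat_take_drop (size u) m) mask_cat; last first.
  by rewrite size_takel // Hm size_cat leq_addr.
by exists (mask (take (size u) m) u), (mask (drop (size u) m) v); split=> //; apply: mask_subseq.
Qed.

Lemma Cn3_sub P w1 w2 : subseq w1 w2 -> Cn3 P w1 -> Cn3 P w2.
Proof. by move=> H [a [b [c [Hs HP]]]]; exists a, b, c; split=> //; exact: subseq_trans Hs H. Qed.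
Lemma Cn4_sub P w1 w2 : subseq w1 w2 -> Cn4 P w1 -> Cn4 P w2.
Proof. by move=> H [a [b [c [d [Hs HP]]]]]; exists a, b, c, d; split=> //; exact: subseq_trans Hs H. Qed.

Lemma mem_sub (x : nat) s u : subseq s u -> x \in s -> x \in u.
Proof. by move=> H; apply: mem_subseq. Qed.

Lemma front_max3 (P : nat -> nat -> nat -> bool) M u :
  (forall b c, b < M -> c < M -> ~~ P M b c) ->
  all (fun y => y < M) u -> Cn3 P (M :: u) -> Cn3 P u.
Proof.
move=> HP /allP Hu [a [b [c [Hs Hp]]]].
move: Hs; rewrite /=; case: eqP => [Ha Hs | _ Hs]; last by exists a, b, c.
subst a.
have Hb : b < M by apply: Hu; apply: (mem_sub Hs); rewrite inE eqxx.
have Hc : c < M by apply: Hu; apply: (mem_sub Hs); rewrite !inE eqxx orbT.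
by move: (HP b c Hb Hc); rewrite Hp.
Qed.

Lemma min_ins4 (P : nat -> nat -> nat -> nat -> bool) (Q : nat -> nat -> nat -> bool) x u v :
  (forall a b c d, P a b c d -> [&& a < b, a < c & a < d]) ->
  (forall a b c d, P a b c d -> Q b c d) ->
  (forall a b c d, a < b -> a < c -> a < d -> Q b c d -> P a b c d) ->
  all (fun y => x < y) (u ++ v) ->
  (~ Cn4 P (u ++ x :: v) <-> ~ Cn4 P (u ++ v) /\ ~ Cn3 Q v).
Proof.
move=> Hmin HPQ HQP /allP Hall; split.
  move=> HA; split.
    move=> HC; apply: HA; apply: Cn4_sub HC.
    by apply: cat_subseq => //; apply: subseq_cons.
  move=> [a [b [c [Hs Hq]]]]; apply: HA; exists x, a, b, c; split.
    exact: sub_cons_cat.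
  have Hv : forall z, z \in [:: a; b; c] -> x < z.
    by move=> z Hz; apply: Hall; rewrite mem_cat (mem_sub Hs Hz) orbT.
  apply: HQP => //; apply: Hv; rewrite !inE eqxx ?orbT //.
case=> HA HB [a [b [c [d [Hs Hp]]]]].
case: (subseq_catP Hs) => s1 [s2 [Heq Hs1 Hs2]].
case: s2 Heq Hs2 => [|y s2] Heq Hs2.
  apply: HA; exists a, b, c, d; split=> //; rewrite Heq cats0.
  by apply: subseq_trans Hs1 _; apply: prefix_subseq.
move: Hs2; rewrite /=; case: eqP => [Hyx Hs2 | _ Hs2]; last first.
  apply: HA; exists a, b, c, d; split=> //; rewrite Heq; exact: cat_subseq.
subst y.
case: s1 Heq Hs1 => [|z s1] Heq Hs1.
  case: Heq => Ha Heq; subst a; apply: HB; exists b, c, d; split; first by rewrite Heq.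
  exact: HPQ Hp.
case: Heq => Hz Heq; subst z.
have Ha : x < a by apply: Hall; rewrite mem_cat (mem_sub Hs1) // inE eqxx.
have Hx : x \in [:: b; c; d] by rewrite Heq mem_cat inE eqxx orbT.
move: (Hmin _ _ _ _ Hp); move: Hx; rewrite !inE => /or3P [] /eqP Hx; lia.
Qed.
Lemma adj3 (P : nat -> nat -> nat -> bool) M' M u v :
  (forall b c y y', b < y -> c < y -> b < y' -> c < y' -> P y b c = P y' b c) ->
  (forall a c y y', a < y -> c < y -> a < y' -> c < y' -> P a y c = P a y' c) ->
  (forall a b y y', a < y -> b < y -> a < y' -> b < y' -> P a b y = P a b y') ->
  (forall a, a < M' -> ~~ P a M' M) ->
  (forall c, c < M' -> ~~ P M' M c) ->
  all (fun y => y < M') (u ++ v) -> M' < M ->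
  ~ Cn3 P (u ++ M' :: v) -> ~ Cn3 P (u ++ M' :: M :: v).
Proof.
move=> H1 H2 H3 Ha Hc /allP Hall HM HA [a [b [c [Hs Hp]]]].
case: (subseq_catP Hs) => s1 [s2 [Heq Hs1 Hs2]].
have Hu z : z \in s1 -> z < M'.
  by move=> Hz; apply: Hall; rewrite mem_cat (mem_sub Hs1 Hz).
case: s2 Heq Hs2 => [|y s2] Heq Hs2.
  apply: HA; exists a, b, c; split=> //; rewrite Heq cats0.
  by apply: subseq_trans Hs1 _; apply: prefix_subseq.
move: Hs2 => /=; case: eqP => [Hy Hs2|Hy Hs2].
  subst y; case: s2 Heq Hs2 => [|z s3] Heq Hs2.
    apply: HA; exists a, b, c; split=> //; rewrite Heq; apply: cat_subseq => //.
    by rewrite /= eqxx sub0seq.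
  move: Hs2 => /=; case: eqP => [Hz Hs3 | _ Hs3].
    subst z.
    have Hv z : z \in s3 -> z < M'.
      by move=> Hz; apply: Hall; rewrite mem_cat (mem_sub Hs3 Hz) orbT.
    case: s1 Heq Hs1 Hu => [|a1 [|a2 s1]] Heq Hs1 Hu.
    - case: Heq => Ha' Hb' Hs3'; subst a b s3.
      by move: (Hc c (Hv c (mem_head _ _))); rewrite Hp.
    - case: Heq => Ha' Hb' Hc' Hs3'; subst a b c s3.
      by move: (Ha a1 (Hu a1 (mem_head _ _))); rewrite Hp.
    - case: Heq => _ _ /(congr1 size); rewrite size_cat /=; lia.
  apply: HA; exists a, b, c; split=> //; rewrite Heq; apply: cat_subseq => //=.
  by rewrite eqxx.
move: Hs2 => /=; case: eqP => [Hy2 Hs2 | _ Hs2]; last first.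
  apply: HA; exists a, b, c; split=> //; rewrite Heq; apply: cat_subseq Hs1 _.
  exact: subseq_trans Hs2 (subseq_cons v M').
subst y.
have Hv z : z \in s2 -> z < M'.
  by move=> Hz; apply: Hall; rewrite mem_cat (mem_sub Hs2 Hz) orbT.
apply: HA.
case: s1 Heq Hs1 Hu => [|a1 [|a2 [|a3 s1]]] Heq Hs1 Hu.
- case: Heq => Ha' Hs2'; subst a s2.
  exists M', b, c; split; first exact: sub_cons_cat.
  have hb := Hv b (mem_head _ _); have hc : c < M' by apply: Hv; rewrite !inE eqxx orbT.
  by rewrite (H1 b c M' M) //; lia.
- case: Heq => Ha' Hb' Hs2'; subst a b s2.
  exists a1, M', c; split.
    rewrite -[[:: a1; M'; c]]/([:: a1] ++ [:: M'; c]); apply: cat_subseq Hs1 _.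
    by rewrite /= eqxx.
  have ha := Hu a1 (mem_head _ _); have hc := Hv c (mem_head _ _).
  by rewrite (H2 a1 c M' M) //; lia.
- case: Heq => Ha' Hb' Hc' Hs2'; subst a b c s2.
  exists a1, a2, M'; split.
    rewrite -[[:: a1; a2; M']]/([:: a1; a2] ++ [:: M']); apply: cat_subseq Hs1 _.
    by rewrite /= eqxx sub0seq.
  have ha := Hu a1 (mem_head _ _); have hb : a2 < M' by apply: Hu; rewrite !inE eqxx orbT.
  by rewrite (H3 a1 a2 M' M) //; lia.
- case: Heq => _ _ _ /(congr1 size); rewrite size_cat /=; lia.
Qed.

Lemma front_big4 (P : nat -> nat -> nat -> nat -> bool) n x u :
  (forall b c d, b <= n -> c <= n -> d <= n -> ~~ P x b c d) ->
  all (fun y => y <= n) u -> ~ Cn4 P u -> ~ Cn4 P (x :: u).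
Proof.
move=> HP /allP Hu HA [a [b [c [d [Hs Hp]]]]].
move: Hs => /=; case: eqP => [Ha Hs | _ Hs]; last by apply: HA; exists a, b, c, d.
subst a.
have hb : b <= n by apply: Hu; apply: (mem_sub Hs); rewrite inE eqxx.
have hc : c <= n by apply: Hu; apply: (mem_sub Hs); rewrite !inE eqxx orbT.
have hd : d <= n by apply: Hu; apply: (mem_sub Hs); rewrite !inE eqxx !orbT.
by move: (HP b c d hb hc hd); rewrite Hp.
Qed.

Lemma mono4 (P : nat -> nat -> nat -> nat -> bool) (f : nat -> nat) w :
  (forall a b c d, P (f a) (f b) (f c) (f d) = P a b c d) ->
  Cn4 P (map f w) <-> Cn4 P w.
Proof.
move=> HP; split; last first.
  move=> [a [b [c [d [Hs Hp]]]]]; exists (f a), (f b), (f c), (f d); split.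
    exact: (map_subseq f Hs).
  by rewrite HP.
move=> [a' [b' [c' [d' [/subseqP [m _ Hm] Hp]]]]].
rewrite -map_mask in Hm.
case Es: (mask m w) Hm => [|a [|b [|c [|d [|e r]]]]] //= [] Ha Hb Hc Hd.
subst a' b' c' d'; exists a, b, c, d; split; last by rewrite -HP.
by rewrite -Es; apply: mask_subseq.
Qed.

Lemma sub3 w1 w2 : subseq w1 w2 -> A3 w2 -> A3 w1.
Proof. move=> H [H1 H2]; split=> HC. by apply: H1; apply: Cn3_sub H HC. by apply: H2; apply: Cn3_sub H HC. Qed.
Lemma sub4 w1 w2 : subseq w1 w2 -> A4 w2 -> A4 w1.
Proof. move=> H [H1 H2]; split=> HC. by apply: H1; apply: Cn4_sub H HC. by apply: H2; apply: Cn4_sub H HC. Qed.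

Lemma A3_A4 u : A3 u -> A4 u.
Proof.
case=> H1 H2; split=> -[a [b [c [d [Hs Hp]]]]].
  apply: H1; exists b, c, d; split; first exact: subseq_trans (subseq_cons _ a) Hs.
  by move: Hp; rewrite /P1243 /P132; lia.
apply: H2; exists b, c, d; split; first exact: subseq_trans (subseq_cons _ a) Hs.
by move: Hp; rewrite /P1324 /P213; lia.
Qed.

Lemma front_max3A M u : all (fun y => y < M) u -> A3 (M :: u) <-> A3 u.
Proof.
move=> Hu; split; first by apply: sub3; apply: subseq_cons.
case=> H1 H2; split=> HC.
  by apply: H1; apply: (front_max3 (P:=P132) _ Hu HC) => b c hb hc; rewrite /P132; lia.
by apply: H2; apply: (front_max3 (P:=P213) _ Hu HC) => b c hb hc; rewrite /P213; lia.
Qed.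

Lemma adj3A M' M u v : all (fun y => y < M') (u ++ v) -> M' < M ->
  A3 (u ++ M' :: v) -> A3 (u ++ M' :: M :: v).
Proof.
move=> Hall HM [H1 H2]; split.
  by apply: (adj3 _ _ _ _ _ Hall HM H1) => *; rewrite /P132; lia.
by apply: (adj3 _ _ _ _ _ Hall HM H2) => *; rewrite /P213; lia.
Qed.

Lemma min_ins4A x u v : all (fun y => x < y) (u ++ v) ->
  A4 (u ++ x :: v) <-> A4 (u ++ v) /\ A3 v.
Proof.
move=> Hall.
have E1 := @min_ins4 P1243 P132 x u v.
have E2 := @min_ins4 P1324 P213 x u v.
have {}E1 : ~ Cn4 P1243 (u ++ x :: v) <-> ~ Cn4 P1243 (u ++ v) /\ ~ Cn3 P132 v.
  apply: E1 => //; rewrite /P1243 /P132 => *; lia.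
have {}E2 : ~ Cn4 P1324 (u ++ x :: v) <-> ~ Cn4 P1324 (u ++ v) /\ ~ Cn3 P213 v.
  apply: E2 => //; rewrite /P1324 /P213 => *; lia.
rewrite /A4 /A3; tauto.
Qed.

Lemma front_min4A x u : all (fun y => x < y) u -> A4 (x :: u) <-> A3 u.
Proof.
move=> Hall; have := @min_ins4A x [::] u Hall; rewrite /= => E.
split; first by case/E.
by move=> H; apply/E; split=> //; apply: A3_A4.
Qed.

Lemma front_big4A n x u : all (fun y => y <= n) u -> n <= x + 2 ->
  A4 (x :: u) <-> A4 u.
Proof.
move=> Hu Hx; split; first by apply: sub4; apply: subseq_cons.
case=> H1 H2; split.
  by apply: (front_big4 (n:=n)) => // b c d *; rewrite /P1243; lia.
by apply: (front_big4 (n:=n)) => // b c d *; rewrite /P1324; lia.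
Qed.

Lemma mono4A (f : nat -> nat) w : (forall a b, (f a < f b) = (a < b)) ->
  A4 (map f w) <-> A4 w.
Proof.
move=> Hf; rewrite /A4 (mono4 (P:=P1243)) ?(mono4 (P:=P1324)) //.
  by move=> a b c d; rewrite /P1324 !Hf.
by move=> a b c d; rewrite /P1243 !Hf.
Qed.

Lemma small4 w : size w < 4 -> A4 w.
Proof.
by move=> Hw; split=> -[a [b [c [d [/size_subseq Hs _]]]]]; move: Hs => /=; lia.
Qed.

Lemma small3 w : size w < 3 -> A3 w.
Proof.
by move=> Hw; split=> -[a [b [c [/size_subseq Hs _]]]]; move: Hs => /=; lia.
Qed.

Definition Qn n w := A4b w && (index n w == (index 1 w).+1).

Lemma oneline_inj n : injective (@oneline n).
Proof.
move=> s s' H; apply/permP => i; apply/val_inj.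
have Hi : i \in enum 'I_n by rewrite mem_enum.
by move/eq_in_map: H => /(_ i Hi) [].
Qed.

Lemma oneline_perm n (s : {perm 'I_n}) : perm_eq (oneline s) (iota 1 n).
Proof.
apply: uniq_perm.
- rewrite map_inj_uniq ?enum_uniq // => i j [] /val_inj; exact: perm_inj.
- exact: iota_uniq.
move=> v; rewrite mem_iota; apply/mapP/idP.
  by case=> i _ ->; have := ltn_ord (s i); lia.
move=> Hv; have Hj : v.-1 < n by lia.
exists ((s^-1)%g (Ordinal Hj)); first by rewrite mem_enum.
by rewrite permKV /=; lia.
Qed.

Lemma map_oneline n :
  perm_eq (map (@oneline n) (enum {perm 'I_n})) (permutations (iota 1 n)).
Proof.
have U1 : uniq (map (@oneline n) (enum {perm 'I_n})).
  by rewrite map_inj_uniq ?enum_uniq //; exact: oneline_inj.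
apply: uniq_perm => //; first exact: permutations_uniq.
have Hsub : {subset map (@oneline n) (enum {perm 'I_n}) <= permutations (iota 1 n)}.
  by move=> w /mapP [s _ ->]; rewrite mem_permutations oneline_perm.
have Hsz : size (permutations (iota 1 n)) <= size (map (@oneline n) (enum {perm 'I_n})).
  by rewrite size_permutations ?iota_uniq // size_map -cardE card_Sn size_iota.
by case: (uniq_min_size U1 Hsub Hsz).
Qed.

Lemma t_count n l : t n l =
  count (fun w => Qn n w && (head 0 w == l)) (permutations (iota 1 n)).
Proof.
rewrite /t cardE /enum_mem size_filter -enumT.
rewrite -(seq.permP (map_oneline n)) count_map.
rewrite count_map enumT; apply: eq_count => s; rewrite /= inE.
by [].
Qed.

Lemma count_bij (T1 T2 : eqType) (l1 : seq T1) (l2 : seq T2)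
  (P1 : pred T1) (P2 : pred T2) (f : T1 -> T2) :
  uniq l1 -> uniq l2 ->
  (forall x y, x \in l1 -> P1 x -> y \in l1 -> P1 y -> f x = f y -> x = y) ->
  (forall x, x \in l1 -> P1 x -> (f x \in l2) && P2 (f x)) ->
  (forall y, y \in l2 -> P2 y -> exists2 x, (x \in l1) && P1 x & y = f x) ->
  count P1 l1 = count P2 l2.
Proof.
move=> U1 U2 Hinj Hf Hs.
rewrite -!size_filter -(size_map f); apply: perm_size; apply: uniq_perm.
- rewrite map_inj_in_uniq ?filter_uniq // => x y.
  by rewrite !mem_filter => /andP [p1 m1] /andP [p2 m2]; exact: Hinj.
- exact: filter_uniq.
move=> y; apply/mapP/idP.
  case=> x; rewrite mem_filter => /andP [p1 m1] ->; rewrite mem_filter.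
  by case/andP: (Hf x m1 p1) => -> ->.
rewrite mem_filter => /andP [p2 m2]; case: (Hs y m2 p2) => x Hx ->.
by exists x => //; rewrite mem_filter andbC.
Qed.

Lemma perm_mid (x : nat) s1 s2 : perm_eq (s1 ++ x :: s2) (x :: s1 ++ s2).
Proof. by apply/permPl; exact: (perm_catCA s1 [:: x] s2). Qed.

Lemma perm_ins k (x : nat) w : perm_eq (take k w ++ x :: drop k w) (x :: w).
Proof. by apply: perm_trans (perm_mid _ _ _) _; rewrite cat_take_drop. Qed.

Lemma count_split (T : Type) (a b : pred T) s :
  count a s = count (fun x => a x && b x) s + count (fun x => a x && ~~ b x) s.
Proof. by elim: s => //= x s ->; case: (a x); case: (b x) => /=; lia. Qed.

Definition insAfter (y x : nat) w := take (index y w).+1 w ++ x :: drop (index y w).+1 w.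
Definition insBefore (y x : nat) w := take (index y w) w ++ x :: drop (index y w) w.

Lemma insAfter_split y x u v : y \notin u ->
  insAfter y x (u ++ y :: v) = u ++ y :: x :: v.
Proof.
move=> H; rewrite /insAfter index_cat (negbTE H) /= eqxx addn0.
rewrite take_cat drop_cat ltnNge leqnSn /= subSnn /= ?take0 ?drop0.
by rewrite -?catA.
Qed.

Lemma insBefore_split y x u v : y \notin u ->
  insBefore y x (u ++ y :: v) = u ++ x :: y :: v.
Proof.
move=> H; rewrite /insBefore index_cat (negbTE H) /= eqxx addn0.
by rewrite take_size_cat // drop_size_cat.
Qed.

Lemma filter_ins k (x : nat) w :
  filter (predC1 x) (take k w ++ x :: drop k w) = filter (predC1 x) w.
Proof. by rewrite filter_cat /= eqxx /= -filter_cat cat_take_drop. Qed.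

Lemma filter_notin (x : nat) w : x \notin w -> filter (predC1 x) w = w.
Proof.
move=> H; apply/all_filterP; apply/allP => y Hy /=.
by apply/eqP => Hyx; subst; rewrite Hy in H.
Qed.

Lemma uniq_mid (x : nat) u v : uniq (u ++ x :: v) -> (x \notin u) && (x \notin v).
Proof.
rewrite cat_uniq /= => /and3P [_ /norP [H1 _] /andP [H2 _]].
by rewrite H1 H2.
Qed.

Lemma count_A3 m a : count A3b (permutations (iota a m.+1)) = 2 ^ m.
Proof.
elim: m => [|m IH].
  have HL : permutations [:: a] = [:: [:: a]].
    by [].
  have H : A3b [:: a] by apply/A3bP; apply: small3.
  by rewrite /= ?HL /= H.
set M := a + m.+1; set M' := a + m.
have HS : iota a m.+2 = rcons (iota a m.+1) M.
  by rewrite -cats1 -(iotaD a m.+1 1) addn1.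
have HSS w : perm_eq w (iota a m.+2) = perm_eq w (M :: iota a m.+1).
  rewrite HS; apply/idP/idP => H.
    apply: perm_trans H _; apply/permPl; exact: perm_rcons.
  apply: perm_trans H _; rewrite perm_sym; apply/permPl; exact: perm_rcons.
have memS w v : perm_eq w (iota a m.+1) -> v \in w = (a <= v < a + m.+1).
  by move=> Hw; rewrite (perm_mem Hw) mem_iota.
rewrite (count_split _ (fun w => head 0 w == M)) expnS mul2n -addnn.
have E1 : count A3b (permutations (iota a m.+1)) =
    count (fun w => A3b w && (head 0 w == M)) (permutations (iota a m.+2)).
  apply: (count_bij (f := cons M)); rewrite ?permutations_uniq //.
  - by move=> x y _ _ _ _ [].
  - move=> w; rewrite mem_permutations => Hw HA.
    rewrite mem_permutations /= eqxx andbT HSS perm_cons Hw /=.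
    apply/A3bP; apply/front_max3A; last by apply/A3bP.
    by apply/allP => v; rewrite (memS w v Hw) /M; lia.
  - move=> y; rewrite mem_permutations HSS => Hy /andP [HA /eqP Hh].
    case: y Hy HA Hh => [|z w] Hy HA Hh; first by move/perm_size: Hy.
    rewrite /= in Hh; subst z; rewrite perm_cons in Hy.
    exists w => //; rewrite mem_permutations Hy /=.
    by apply/A3bP; move/A3bP: HA; apply: sub3; apply: subseq_cons.
have E2 : count A3b (permutations (iota a m.+1)) =
    count (fun w => A3b w && ~~ (head 0 w == M)) (permutations (iota a m.+2)).
  apply: (count_bij (f := insAfter M' M)); rewrite ?permutations_uniq //.
  - move=> x y; rewrite !mem_permutations => Hx _ Hy _ E.
    have : filter (predC1 M) (insAfter M' M x) = filter (predC1 M) (insAfter M' M y).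
      by rewrite E.
    rewrite /insAfter !filter_ins !filter_notin // ?(memS _ _ Hx) ?(memS _ _ Hy) /M; lia.
  - move=> w; rewrite !mem_permutations => Hw HA.
    have Uw : uniq w by rewrite (perm_uniq Hw) iota_uniq.
    apply/andP; split.
      rewrite HSS; apply: perm_trans (perm_ins _ _ _) _; by rewrite perm_cons.
    apply/andP; split; last first.
      case: w Hw HA Uw => [|z w'] Hw HA Uw; first by move/perm_size: Hw.
      rewrite /insAfter /=; have := memS _ z Hw; rewrite mem_head /M => Hz.
      apply/eqP; lia.
    have HM' : M' \in w by rewrite (memS w M' Hw) /M'; lia.
    case/splitPr: HM' Hw HA Uw => u v Hw HA Uw.
    case/andP: (uniq_mid Uw) => Hu Hv.
    rewrite insAfter_split //; apply/A3bP; apply: adj3A; last by apply/A3bP.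
      apply/allP => z Hz; have Hzw : z \in u ++ M' :: v.
        by move: Hz; rewrite !mem_cat inE => /orP [->|->] //; rewrite !orbT.
      have Hne : z != M'.
        by apply/eqP => E; subst z; move: Hz; rewrite mem_cat (negbTE Hu) (negbTE Hv).
      move: (memS _ z Hw); rewrite Hzw /M'; move: Hne => /eqP; lia.
    rewrite /M /M'; lia.
  - move=> y; rewrite mem_permutations => Hy /andP [HA Hh].
    have Uy : uniq y by rewrite (perm_uniq Hy) iota_uniq.
    have HMy : M \in y by rewrite (perm_mem Hy) mem_iota /M; lia.
    case/splitPr: HMy Hy HA Hh Uy => x z Hy HA Hh Uy.
    case/andP: (uniq_mid Uy) => HMx HMz.
    case/lastP: x Hy HA Hh Uy HMx => [|x' q] Hy HA Hh Uy HMx.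
      by rewrite /= eqxx in Hh.
    rewrite cat_rcons in Hy HA Hh Uy.
    have Hq : q \in iota a m.+2 by rewrite -(perm_mem Hy) mem_cat mem_head orbT.
    have HqM : q != M by apply: contraNneq HMx => <-; rewrite mem_rcons mem_head.
    case: (q =P M') => [Hq'|Hq'].
      subst q; exists (x' ++ M' :: z).
        have Ep : perm_eq (x' ++ M' :: M :: z) (M :: x' ++ M' :: z).
          by have := perm_mid M (x' ++ [:: M']) z; rewrite -!catA.
        rewrite mem_permutations -(perm_cons M) -HSS.
        have Ep2 : perm_eq (M :: x' ++ M' :: z) (x' ++ M' :: M :: z) by rewrite perm_sym.
        rewrite (perm_trans Ep2 Hy) /=.
        apply/A3bP; move/A3bP: HA; apply: sub3; apply: cat_subseq => //.
        by rewrite /= eqxx; apply: subseq_cons.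
      rewrite insAfter_split ?cat_rcons //.
      by case/andP: (uniq_mid Uy) => H _.
    exfalso; move/A3bP: HA => [H1 H2].
    have Hqlt : q < M' by move: Hq; rewrite mem_iota /M /M'; move: HqM Hq' => /eqP ? ?; lia.
    have HM'y : M' \in x' ++ q :: M :: z by rewrite (perm_mem Hy) mem_iota /M'; lia.
    move: HM'y; rewrite mem_cat !inE => /or3P [HM'x | /eqP HM'q | /orP [/eqP HM'M | HM'z]].
    + apply: H2; case/splitPr: HM'x => p r; exists M', q, M; split.
        rewrite -catA /=; apply: sub_cons_cat; apply: sub_cons_cat.
        by rewrite /= eqxx sub0seq.
      rewrite /P213 /M /M'; lia.
    + by apply: Hq'.
    + rewrite /M /M' in HM'M; lia.
    + apply: H1; case/splitPr: HM'z => p r; exists q, M, M'; split.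
        apply: sub_cons_cat; rewrite /= eqxx; apply: sub_cons_cat; exact: sub0seq.
      rewrite /P132 /M /M'; lia.
by rewrite -E1 -E2 IH.
Qed.

Lemma index_cons_neq (x y : nat) s : y != x -> index x (y :: s) = (index x s).+1.
Proof. by move=> H /=; rewrite (negbTE H). Qed.

Lemma iota_rcons m n : iota m n.+1 = rcons (iota m n) (m + n).
Proof. by rewrite -addn1 iotaD -cats1. Qed.

Lemma key1 n w : 1 < n -> all (fun v => 1 < v < n) w -> A4 (1 :: n :: w) <-> A3 w.
Proof.
move=> Hn1 /allP Hw.
have Hn : all (fun v => 1 < v) (n :: w).
  by rewrite /= Hn1; apply/allP => v /Hw; lia.
rewrite (front_min4A Hn) front_max3A //.
by apply/allP => v /Hw; lia.
Qed.

Lemma T1 k : t k.+3 1 = count A3b (permutations (iota 2 k.+1)).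
Proof.
rewrite t_count.
have E : iota 1 k.+3 = 1 :: rcons (iota 2 k.+1) k.+3.
  by have := iota_rcons 2 k.+1; rewrite (_ : 2 + k.+1 = k.+3) // => <-.
have HSS w : perm_eq w (iota 1 k.+3) = perm_eq w (1 :: k.+3 :: iota 2 k.+1).
  rewrite E; apply/idP/idP => H; apply: perm_trans H _; last rewrite perm_sym;
  by rewrite perm_cons; apply/permPl; exact: perm_rcons.
have memS w v : perm_eq w (iota 2 k.+1) -> v \in w = (2 <= v < 2 + k.+1).
  by move=> Hw; rewrite (perm_mem Hw) mem_iota.
have allS w : perm_eq w (iota 2 k.+1) -> all (fun v => 1 < v < k.+3) w.
  by move=> Hw; apply/allP => v; rewrite (memS w v Hw); lia.
symmetry; apply: (count_bij (f := fun w => 1 :: k.+3 :: w)); rewrite ?permutations_uniq //.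
- by move=> x y _ _ _ _ [].
- move=> w; rewrite mem_permutations => Hw HA.
  rewrite mem_permutations HSS !perm_cons Hw /= /Qn /= eqxx /= !andbT.
  apply/A4bP; apply/key1 => //; first exact: allS.
  by apply/A3bP.
- move=> y; rewrite mem_permutations => Hy /andP [/andP [HA Hidx] Hh].
  case: y Hy HA Hidx Hh => [|z y'] Hy HA Hidx Hh; first by move/perm_size: Hy; rewrite size_iota.
  move: Hh => /= /eqP Hz; subst z.
  move: Hidx; rewrite /= => Hidx.
  case: y' Hy HA Hidx => [|z w] Hy HA Hidx; first by move/perm_size: Hy; rewrite size_iota.
  move: Hidx => /=; case: (z =P k.+3) => // Hz _; subst z.
  rewrite HSS !perm_cons in Hy.
  exists w => //; rewrite mem_permutations Hy /=.
  by apply/A3bP; apply/(key1 _ (allS _ Hy)) => //; apply/A4bP.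
Qed.

Lemma key2 n a b : all (fun v => 2 < v) (a ++ n :: b) ->
  A4 (2 :: a ++ 1 :: n :: b) <-> A3 (a ++ n :: b).
Proof.
move=> Hall.
have H1 : all (fun v => 1 < v) ((2 :: a) ++ n :: b).
  rewrite /=; apply/allP => v /(allP Hall); lia.
have := min_ins4A H1; rewrite /= => E.
have := front_min4A Hall => E2.
split.
  by case/E => /E2.
move=> H; apply/E; split; first by apply/E2.
by apply: sub3 H; apply: suffix_subseq.
Qed.

Lemma perm2 n a b : perm_eq (2 :: a ++ 1 :: n :: b) (1 :: 2 :: a ++ n :: b).
Proof.
apply: (perm_trans (y := 2 :: 1 :: a ++ n :: b)); first by rewrite perm_cons perm_mid.
by apply/permPl; exact: (perm_catCA [:: 2] [:: 1] _).
Qed.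

Lemma T2 k : t k.+3 2 = count A3b (permutations (iota 3 k.+1)).
Proof.
rewrite t_count.
set n := k.+3.
have memS w v : perm_eq w (iota 3 k.+1) -> v \in w = (3 <= v < 3 + k.+1).
  by move=> Hw; rewrite (perm_mem Hw) mem_iota.
have allS w : perm_eq w (iota 3 k.+1) -> all (fun v => 2 < v) w.
  by move=> Hw; apply/allP => v; rewrite (memS w v Hw); lia.
symmetry; apply: (count_bij (f := fun w => 2 :: insBefore n 1 w)); rewrite ?permutations_uniq //.
- move=> x y; rewrite !mem_permutations => Hx _ Hy _ [] E.
  have : filter (predC1 1) (insBefore n 1 x) = filter (predC1 1) (insBefore n 1 y).
    by rewrite E.
  rewrite /insBefore !filter_ins !filter_notin // ?(memS _ _ Hx) ?(memS _ _ Hy); lia.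
- move=> w; rewrite mem_permutations => Hw HA.
  have Uw : uniq w by rewrite (perm_uniq Hw) iota_uniq.
  have Hnw : n \in w by rewrite (memS _ _ Hw) /n; lia.
  have Hall := allS _ Hw.
  case/splitPr: Hnw Hw HA Uw Hall => a b Hw HA Uw Hall.
  case/andP: (uniq_mid Uw) => Hna _.
  have H1a : 1 \notin a.
    by apply/negP => H; move/allP: Hall => /(_ 1); rewrite mem_cat H => /(_ isT).
  rewrite insBefore_split //.
  rewrite mem_permutations (perm_trans (perm2 n a b)) /=; last first.
    by rewrite !perm_cons.
  rewrite /Qn.
  have -> : A4b (2 :: a ++ [:: 1, n & b]) by apply/A4bP; apply/key2 => //; apply/A3bP.
  rewrite /= !index_cat (negbTE Hna) (negbTE H1a) /= eqxx /=.
  by rewrite /n; apply/eqP; lia.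
- move=> y; rewrite mem_permutations => Hy /andP [/andP [HA Hidx] Hh].
  have Uy : uniq y by rewrite (perm_uniq Hy) iota_uniq.
  case: y Hy HA Hidx Hh Uy => [|z y'] Hy HA Hidx Hh Uy; first by move/perm_size: Hy; rewrite size_iota.
  move: Hh => /= /eqP Hz; subst z.
  have H1y : 1 \in y'.
    by have : 1 \in 2 :: y' by rewrite (perm_mem Hy) mem_iota /n; lia.
  have Hny : n \in y'.
    by have : n \in 2 :: y' by rewrite (perm_mem Hy) mem_iota /n; lia.
  case/splitPr: H1y Hy HA Hidx Uy Hny => a g Hy HA Hidx Uy Hny.
  have U' : uniq (a ++ 1 :: g) by case/andP: Uy.
  case/andP: (uniq_mid U') => H1a _.
  have Hna : n \notin a.
    apply/negP => Hna; move: Hidx; rewrite !index_cons_neq // !index_cat Hna (negbTE H1a) /=.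
    rewrite -index_mem in Hna; move/eqP => [] E; rewrite E in Hna.
    by rewrite addn0 ltnNge leqnSn in Hna.
  move: Hidx; rewrite !index_cons_neq // !index_cat (negbTE Hna) (negbTE H1a) /=.
  move/eqP; rewrite addnS => -[] /addnI Hidx.
  have Hng : n \in g by move: Hny; rewrite mem_cat (negbTE Hna) inE /n.
  clear Hny; case: g Hy HA Hidx Uy U' Hng => [|z b] Hy HA Hidx Uy U' Hng //.
  move: Hidx; rewrite /=; case: (z =P n) => [Hz _ | //].
  subst z.
  have Hp : perm_eq (a ++ n :: b) (iota 3 k.+1).
    have := perm2 n a b; rewrite perm_sym => /perm_trans /(_ Hy).
    by rewrite /n /= !perm_cons => H; exact: H.
  exists (a ++ n :: b); last by rewrite insBefore_split.
  rewrite mem_permutations Hp /=.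
  by apply/A3bP; apply/(key2 (allS _ Hp)); apply/A4bP.
Qed.

Lemma Tx k x : 2 <= x -> x <= k -> k.+1 <= x + 2 ->
  count (Qn k) (permutations (iota 1 k)) =
  count (fun w => Qn k.+1 w && (head 0 w == x)) (permutations (iota 1 k.+1)).
Proof.
move=> Hx2 Hxk Hkx.
pose up v := if x <= v then v.+1 else v.
pose down v := if x < v then v.-1 else v.
have Hup a b : (up a < up b) = (a < b).
  by rewrite /up; case: ifP => ?; case: ifP => ?; lia.
have up_inj : injective up.
  by move=> a b; rewrite /up; case: ifP => ?; case: ifP => ?; lia.
have updown v : v != x -> up (down v) = v.
  by move/eqP=> H; rewrite /down; case: ifP => ?; rewrite /up; case: ifP => ?; lia.
have Hbase : perm_eq (x :: map up (iota 1 k)) (iota 1 k.+1).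
  apply: uniq_perm; last first.
  - move=> v; rewrite inE mem_iota; apply/idP/idP.
      case/orP => [/eqP -> | /mapP [u Hu ->]]; first lia.
      by move: Hu; rewrite mem_iota /up; case: ifP => ?; lia.
    move=> Hv; case: (v =P x) => [-> | /eqP Hvx]; first by [].
    apply/orP; right; apply/mapP; exists (down v); last by rewrite updown.
    by rewrite mem_iota /down; case: ifP => ?; move: Hvx => /eqP; lia.
  - exact: iota_uniq.
  rewrite /= map_inj_uniq ?iota_uniq // andbT.
  by apply/mapP => -[v]; rewrite mem_iota /up; case: ifP => ?; lia.
have memw w v : perm_eq w (iota 1 k) -> v \in w = (1 <= v < 1 + k).
  by move=> Hw; rewrite (perm_mem Hw) mem_iota.
have key w : perm_eq w (iota 1 k) -> Qn k.+1 (x :: map up w) = Qn k w.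
  move=> Hw; rewrite /Qn.
  have Hall : all (fun v => v <= k.+1) (map up w).
    by apply/allP => v /mapP [u]; rewrite (memw _ _ Hw) /up => ? ->; case: ifP => ?; lia.
  have -> : A4b (x :: map up w) = A4b w.
    apply/idP/idP => /A4bP H; apply/A4bP.
      exact: ((mono4A w Hup).1 ((front_big4A Hall Hkx).1 H)).
    exact: ((front_big4A Hall Hkx).2 ((mono4A w Hup).2 H)).
  have Hk : up k = k.+1 by rewrite /up; case: ifP => ?; lia.
  have H1 : up 1 = 1 by rewrite /up; case: ifP => ?; lia.
  have E1 : index k.+1 (map up w) = index k w by rewrite -Hk (index_map up_inj).
  have E2 : index 1 (map up w) = index 1 w by rewrite -{1}H1 (index_map up_inj).
  rewrite (@index_cons_neq k.+1 x (map up w)); last by apply/eqP; lia.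
  rewrite (@index_cons_neq 1 x (map up w)); last by apply/eqP; lia.
  by rewrite E1 E2.
apply: (count_bij (f := fun w => x :: map up w)); rewrite ?permutations_uniq //.
- by move=> a b _ _ _ _ [] /(inj_map up_inj).
- move=> w; rewrite mem_permutations => Hw HQ.
  rewrite mem_permutations key // HQ /= eqxx andbT.
  by apply: perm_trans Hbase; rewrite perm_cons perm_map.
- move=> y; rewrite mem_permutations => Hy /andP [HQ Hh].
  case: y Hy HQ Hh => [|z u] Hy HQ Hh; first by move/perm_size: Hy; rewrite size_iota.
  move: Hh => /= /eqP Hz; subst z.
  have Uy : uniq (x :: u) by rewrite (perm_uniq Hy) iota_uniq.
  have Hu : perm_eq u (map up (iota 1 k)).
    have : perm_eq (x :: u) (x :: map up (iota 1 k)).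
      by apply: perm_trans Hy _; rewrite perm_sym.
    by rewrite perm_cons.
  have Hmw : map up (map down u) = u.
    rewrite -map_comp; rewrite -[RHS]map_id; apply/eq_in_map => v Hv /=.
    by apply: updown; apply: contraNneq (proj1 (andP Uy)) => <-.
  have Hw : perm_eq (map down u) (iota 1 k) by apply: (perm_map_inj up_inj); rewrite Hmw.
  exists (map down u); last by rewrite Hmw.
  by rewrite mem_permutations Hw /= -key // Hmw.
Qed.

Lemma count_disj (T : Type) (a b : pred T) s :
  (forall x, a x -> b x -> False) ->
  count a s + count b s = count (fun x => a x || b x) s.
Proof.
move=> H; elim: s => //= y s IH; rewrite -IH.
case Ha: (a y); case Hb: (b y) => /=; try lia.
by case: (H y); rewrite ?Ha ?Hb.
Qed.

Lemma sum_count (L : seq (seq nat)) (Q : pred (seq nat)) k :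
  \sum_(1 <= l < k) count (fun w => Q w && (head 0 w == l)) L =
  count (fun w => Q w && (0 < head 0 w < k)) L.
Proof.
elim: k => [|k IH].
  rewrite big_geq // (eq_count (a2 := pred0)) ?count_pred0 // => w /=.
  by rewrite ltn0 !andbF.
case: (posnP k) => [-> | Hk].
  rewrite big_geq // (eq_count (a2 := pred0)) ?count_pred0 // => w /=.
  by case: (Q w) => //=; case: (head 0 w) => [|[|h]].
rewrite big_nat_recr //= IH count_disj.
  apply: eq_count => w /=; case: (Q w) => //=.
  by apply/idP/idP; lia.
by move=> w /andP [_ H1] /andP [_ /eqP H2]; move: H1; rewrite H2; lia.
Qed.

Lemma head_range m w : 1 <= m -> w \in permutations (iota 1 m) -> Qn m w ->
  0 < head 0 w < m.
Proof.
move=> Hm; rewrite mem_permutations => Hw /andP [_ Hidx].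
case: w Hw Hidx => [|h w'] Hw Hidx; first by move/perm_size: Hw; rewrite size_iota /=; lia.
have : h \in iota 1 m by rewrite -(perm_mem Hw) mem_head.
rewrite mem_iota /= => Hh.
case: (h =P m) => [E | /eqP E]; last by lia.
by subst h; move: Hidx; rewrite /= eqxx.
Qed.

Lemma small2 : count (Qn 2) (permutations (iota 1 2)) = 1.
Proof.
have -> : permutations (iota 1 2) = [:: [:: 1; 2]; [:: 2; 1]] by vm_compute.
have H1 : A4b [:: 1; 2] by apply/A4bP; apply: small4.
have H2 : A4b [:: 2; 1] by apply/A4bP; apply: small4.
by rewrite /count /Qn H1 H2.
Qed.

Theorem lemma5p4 (n : nat) : 3 <= n ->
  (t n 1 = 2 ^ (n - 3) /\ t n 2 = 2 ^ (n - 3)) /\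
  (t n (n - 2) = \sum_(1 <= l < n - 1) t n.-1 l /\
   t n (n - 1) = \sum_(1 <= l < n - 1) t n.-1 l).
Proof.
move=> Hn.
have [k Hk] : exists k, n = k.+3 by exists (n - 3); lia.
subst n.
have -> : k.+3 - 3 = k by lia.
have -> : k.+3 - 1 = k.+2 by lia.
have -> : k.+3 - 2 = k.+1 by lia.
have Hsum : \sum_(1 <= l < k.+2) t k.+3.-1 l =
    count (Qn k.+2) (permutations (iota 1 k.+2)).
  under eq_bigr => l _ do rewrite t_count.
  rewrite sum_count; apply: eq_in_count => w Hw /=.
  case HQ: (Qn k.+2 w) => //=.
  by rewrite (head_range _ Hw HQ).
split; first by rewrite T1 T2 !count_A3.
rewrite Hsum; split.
  clear Hn; case: k Hsum => [|k] Hsum; first by rewrite T1 count_A3 small2.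
  by rewrite t_count -Tx //; lia.
by rewrite t_count -Tx //; lia.
Qed.
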